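(* Let $G=A*_C B$ with $|A/C|\ge2$, $|B/C|\ge2$ and generating set $S=(A\cup B)\setminus\{1\}$. Let $w$ be a nonempty word such that $w^2$ is reduced. Then for every $g\in G$ there is a geodesic word $u$ with $\bar u=g$ that realizes $c_w$ at $g$, i.e. $|u|-|u|_w=\min\{|v|-|v|_w : \bar v=g\}$.
   Context: Words are finite sequences of letters in $S$; $\bar u$ is the element represented, $|u|$ the length, $|g|$ the word length of $g$; a geodesic word is one with $|u|=|\bar u|$. A word $x_1\cdots x_n$ is reduced if $n=1$ or its letters alternately lie in $A\setminus C$ and $B\setminus C$. For a nonempty word $w$ and a word $u$, $|u|_w$ is the maximal number of pairwise non-overlapping occurrences of $w$ as a contiguous subword of $u$, and $c_w(g)=|g|-\min\{|v|-|v|_w:\bar v=g\}$. *)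

(* Defs.v *)
From Stdlib Require Import List Arith.
Import ListNotations.
Set Implicit Arguments.
Unset Strict Implicit.

Record Group := {
  carrier :> Type;
  gmul : carrier -> carrier -> carrier;
  gone : carrier;
  ginv : carrier -> carrier;
  gmulA : forall x y z, gmul x (gmul y z) = gmul (gmul x y) z;
  gmul1l : forall x, gmul gone x = x;
  gmulVl : forall x, gmul (ginv x) x = gone }.

Section Defs.
Variable G : Group.

Definition is_subgroup (H : G -> Prop) : Prop :=
  H (@gone G) /\ (forall x y, H x -> H y -> H (@gmul G x y)) /\
  (forall x, H x -> H (@ginv G x)).

Fixpoint eval (u : list G) : G :=
  match u with [] => @gone G | x :: u' => @gmul G x (eval u') end.

Definition is_word (S : G -> Prop) (u : list G) : Prop := Forall S u.

Definition geodesic (S : G -> Prop) (u : list G) : Prop :=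
  is_word S u /\ forall v, is_word S v -> eval v = eval u -> length u <= length v.

Fixpoint alternating (P R Q : G -> Prop) (u : list G) : Prop :=
  match u with
  | [] => True
  | [x] => (P x /\ ~ Q x) \/ (R x /\ ~ Q x)
  | x :: ((y :: _) as u') =>
      (((P x /\ ~ Q x) /\ (R y /\ ~ Q y)) \/ ((R x /\ ~ Q x) /\ (P y /\ ~ Q y)))
      /\ alternating P R Q u'
  end.

Definition reduced (A B C : G -> Prop) (u : list G) : Prop :=
  length u = 1 \/ alternating A B C u.

Inductive occ (w : list G) : nat -> list G -> Prop :=
  | occ0 : forall u, occ w 0 u
  | occS : forall k p u, occ w k u -> occ w (S k) (p ++ w ++ u).

Definition occ_count (w u : list G) (k : nat) : Prop :=
  occ w k u /\ forall k', occ w k' u -> k' <= k.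

(* G is the (internal) amalgamated free product A *_C B, with C = A ∩ B:
   A, B subgroups, A ∪ B generates G, and (reduced form theorem) every
   nonempty product alternating between A\C and B\C is nontrivial. *)
Definition is_amalgam (A B C : G -> Prop) : Prop :=
  is_subgroup A /\ is_subgroup B /\ (forall x, C x <-> (A x /\ B x)) /\
  (forall g, exists u, Forall (fun x => A x \/ B x) u /\ eval u = g) /\
  (forall u, u <> [] -> alternating A B C u -> eval u <> @gone G).

End Defs.

(* Main.v *)
Require Import Defs.
From Stdlib Require Import List Arith Lia Classical.
Import ListNotations.

Section Grp.
Variable G : Group.
Local Notation "x ** y" := (@gmul G x y) (at level 40, left associativity).
Local Notation one := (@gone G).
Local Notation inv := (@ginv G).

Lemma mulrV (x : G) : x ** inv x = one.
Proof.
  rewrite <- (gmul1l (x ** inv x)).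
  rewrite <- (gmulVl (inv x)) at 1.
  rewrite <- gmulA. rewrite (gmulA (inv x) x). rewrite gmulVl, gmul1l. apply gmulVl.
Qed.
Lemma mulr1 (x : G) : x ** one = x.
Proof. rewrite <- (gmulVl x), gmulA, mulrV. apply gmul1l. Qed.
Lemma invK (x : G) : inv (inv x) = x.
Proof. rewrite <- (mulr1 (inv (inv x))), <- (gmulVl x), gmulA, gmulVl. apply gmul1l. Qed.

Lemma eval_app (l1 l2 : list G) : eval (l1 ++ l2) = eval l1 ** eval l2.
Proof. induction l1; simpl. now rewrite gmul1l. now rewrite IHl1, gmulA. Qed.

End Grp.

Section Main.
Variable G : Group.
Local Notation "x ** y" := (@gmul G x y) (at level 40, left associativity).
Local Notation one := (@gone G).
Local Notation inv := (@ginv G).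
Variables A B C : G -> Prop.
Hypothesis hC : forall x, C x <-> A x /\ B x.
Hypothesis hAs : is_subgroup A.
Hypothesis hBs : is_subgroup B.
Hypothesis Hax : forall u, u <> [] -> alternating A B C u -> eval u <> one.

Definition sing (x : G) := (A x /\ ~ C x) \/ (B x /\ ~ C x).
Definition sf (x y : G) := (A x /\ A y) \/ (B x /\ B y).

Fixpoint chain (u : list G) : Prop :=
  match u with
  | x :: ((y :: _) as u') => ~ sf x y /\ chain u'
  | _ => True
  end.

Definition alt u := Forall sing u /\ chain u.

Lemma alt_alternating u : alt u -> alternating A B C u.
Proof.
  induction u as [|x u IH]; simpl; auto.
  intros [Hf Hc]. inversion Hf; subst.
  destruct u as [|y u]. exact H1.
  destruct Hc as [Hn Hc]. split.
  - inversion H2; subst. unfold sing, sf in *.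
    pose proof (hC x); pose proof (hC y). tauto.
  - apply IH. split; auto.
Qed.

Lemma alternating_chain u : alternating A B C u -> chain u.
Proof.
  induction u as [|x u IH]; simpl; auto.
  destruct u as [|y u]; auto.
  intros [H1 H2]. split; auto.
  unfold sf. pose proof (hC x); pose proof (hC y). tauto.
Qed.

Lemma chain_join l b m : chain (l ++ [b]) -> chain (b :: m) -> chain (l ++ b :: m).
Proof.
  induction l as [|a l IH]; simpl; auto.
  destruct l as [|c l]; simpl.
  - intros [H _] H2; auto.
  - intros [H1 H2] H3; split; auto. apply IH; auto.
Qed.

Lemma chain_tail x u : chain (x :: u) -> chain u.
Proof. destruct u; simpl; tauto. Qed.

Lemma chain_inv u : chain u -> forall l a b m, u = l ++ a :: b :: m -> ~ sf a b.
Proof.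
  intros Hc l. revert u Hc. induction l as [|x l IH]; intros u Hc a b m E; subst; simpl in *.
  - tauto.
  - apply chain_tail in Hc. eapply IH. exact Hc. reflexivity.
Qed.

Lemma chain_of_nobad u : (forall l a b m, u = l ++ a :: b :: m -> ~ sf a b) -> chain u.
Proof.
  induction u as [|x u IH]; simpl; auto.
  destruct u as [|y u]; auto. intros H. split.
  - apply (H [] x y u). reflexivity.
  - apply IH. intros l a b m E. apply (H (x :: l) a b m). simpl. now rewrite E.
Qed.


Lemma A_inv x : A (inv x) <-> A x.
Proof. destruct hAs as [_ [_ H]]. split; intro. rewrite <- invK. auto. auto. Qed.
Lemma B_inv x : B (inv x) <-> B x.
Proof. destruct hBs as [_ [_ H]]. split; intro. rewrite <- invK. auto. auto. Qed.

Lemma A_mulCl c x : C c -> (A (c ** x) <-> A x).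
Proof.
  intro Hc. apply hC in Hc. destruct hAs as [_ [Hm Hi]]. split; intro.
  - replace x with (inv c ** (c ** x)). apply Hm; [apply Hi|]; tauto.
    now rewrite gmulA, gmulVl, gmul1l.
  - apply Hm; tauto.
Qed.
Lemma B_mulCl c x : C c -> (B (c ** x) <-> B x).
Proof.
  intro Hc. apply hC in Hc. destruct hBs as [_ [Hm Hi]]. split; intro.
  - replace x with (inv c ** (c ** x)). apply Hm; [apply Hi|]; tauto.
    now rewrite gmulA, gmulVl, gmul1l.
  - apply Hm; tauto.
Qed.
Lemma A_mulCr c x : C c -> (A (x ** c) <-> A x).
Proof.
  intro Hc. apply hC in Hc. destruct hAs as [_ [Hm Hi]]. split; intro.
  - replace x with ((x ** c) ** inv c). apply Hm; [|apply Hi]; tauto.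
    now rewrite <- gmulA, mulrV, mulr1.
  - apply Hm; tauto.
Qed.
Lemma B_mulCr c x : C c -> (B (x ** c) <-> B x).
Proof.
  intro Hc. apply hC in Hc. destruct hBs as [_ [Hm Hi]]. split; intro.
  - replace x with ((x ** c) ** inv c). apply Hm; [|apply Hi]; tauto.
    now rewrite <- gmulA, mulrV, mulr1.
  - apply Hm; tauto.
Qed.

Ltac hc_all := repeat match goal with
  | x : G |- _ => lazymatch goal with
                  | _ : C x <-> _ |- _ => fail
                  | _ => pose proof (hC x) end
  end.

Lemma alt_replace_last l a b : alt (l ++ [a]) -> sing b -> sf a b -> alt (l ++ [b]).
Proof.
  intros [Hf Hc] Hb Hab. apply Forall_app in Hf as [Hf1 Hf2]. inversion Hf2; subst.
  split. apply Forall_app; split; auto.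
  revert Hc Hf1. clear Hf2 H2. induction l as [|x l IH]; simpl; auto.
  destruct l as [|y l]; simpl.
  - intros [Hn _] Hf. split; auto. inversion Hf; subst.
    unfold sing, sf in *. pose proof (hC x); pose proof (hC a); pose proof (hC b). tauto.
  - intros [Hn Hc] Hf. inversion Hf; subst. split; auto. apply IH; auto.
Qed.

Lemma alt_replace_first a b m : alt (a :: m) -> sing b -> sf a b -> alt (b :: m).
Proof.
  intros [Hf Hc] Hb Hab. inversion Hf; subst. split. constructor; auto.
  destruct m as [|y m]; simpl in *; auto. destruct Hc as [Hn Hc]; split; auto.
  inversion H2; subst.
  unfold sing, sf in *. pose proof (hC y); pose proof (hC a); pose proof (hC b). tauto.
Qed.

Lemma alt_join l b m : alt (l ++ [b]) -> alt (b :: m) -> alt (l ++ b :: m).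
Proof.
  intros [Hf Hc] [Hf' Hc']. split.
  - apply Forall_app in Hf as [Hf1 _]. apply Forall_app; auto.
  - apply chain_join; auto.
Qed.

Definition inv_word (u : list G) := rev (map inv u).

Lemma eval_inv_word u : eval (inv_word u) ** eval u = one.
Proof.
  induction u as [|x u IH]; simpl. apply gmul1l.
  unfold inv_word in *. simpl. rewrite eval_app. simpl.
  rewrite mulr1. rewrite <- gmulA, (gmulA (inv x)), gmulVl, gmul1l. exact IH.
Qed.

Lemma sing_inv x : sing (inv x) <-> sing x.
Proof.
  unfold sing. pose proof (A_inv x); pose proof (B_inv x).
  pose proof (hC x); pose proof (hC (inv x)). tauto.
Qed.

Lemma alt_inv_word p : alt p -> alt (inv_word p).
Proof.
  induction p as [|y p IH]; intros Hp. split; simpl; auto.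
  unfold inv_word in *. simpl.
  destruct Hp as [Hf Hc]. inversion Hf; subst.
  destruct p as [|z p].
  - simpl. split. constructor. now apply sing_inv. auto. exact I.
  - simpl in *. destruct Hc as [Hn Hc]. inversion H2; subst.
    assert (alt (rev (map inv p) ++ [inv z])) as IH' by (apply IH; split; auto).
    rewrite <- app_assoc. simpl. apply alt_join. exact IH'.
    split. constructor. now apply sing_inv. constructor. now apply sing_inv. auto.
    simpl. split; auto. unfold sf. pose proof (A_inv y); pose proof (B_inv y).
    pose proof (A_inv z); pose proof (B_inv z). unfold sf in Hn. tauto.
Qed.


Lemma alt_tail x u : alt (x :: u) -> alt u.
Proof. intros [Hf Hc]. inversion Hf; subst. split; auto. eapply chain_tail; eauto. Qed.

Lemma sing_mulCl c x : C c -> sing x -> sing (c ** x).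
Proof. intros Hc. unfold sing. pose proof (A_mulCl c x Hc); pose proof (B_mulCl c x Hc).
  pose proof (hC x); pose proof (hC (c ** x)). tauto. Qed.
Lemma sf_mulCl c x : C c -> sing x -> sf x (c ** x).
Proof. intros Hc. unfold sing, sf. pose proof (A_mulCl c x Hc); pose proof (B_mulCl c x Hc).
  tauto. Qed.
Lemma sing_mulCr c x : C c -> sing x -> sing (x ** c).
Proof. intros Hc. unfold sing. pose proof (A_mulCr c x Hc); pose proof (B_mulCr c x Hc).
  pose proof (hC x); pose proof (hC (x ** c)). tauto. Qed.
Lemma sf_mulCr c x : C c -> sing x -> sf x (x ** c).
Proof. intros Hc. unfold sing, sf. pose proof (A_mulCr c x Hc); pose proof (B_mulCr c x Hc).
  tauto. Qed.

Lemma app_ne (l : list G) a : l ++ [a] <> [].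
Proof. intro H. apply app_eq_nil in H. destruct H; discriminate. Qed.

Lemma Gl p : forall q c, alt p -> alt q -> C c ->
  eval (inv_word p) ** (c ** eval q) = one -> length p = length q.
Proof.
  induction p as [|y p IH]; intros q c Hp Hq Hc E.
  - destruct q as [|x q]; auto. exfalso. simpl in E. rewrite gmul1l in E.
    destruct Hq as [Hf Hq']. inversion Hf; subst.
    apply (Hax ((c ** x) :: q)). discriminate.
    apply alt_alternating. apply alt_replace_first with x; auto. split; auto.
    apply sing_mulCl; auto. apply sf_mulCl; auto.
    simpl. rewrite <- gmulA; exact E.
  - pose proof (alt_inv_word _ Hp) as Hip. unfold inv_word in Hip, E. simpl in Hip, E.
    rewrite eval_app in E. simpl in E. rewrite mulr1 in E.
    destruct Hp as [Hpf Hpc]. inversion Hpf; subst.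
    assert (Hsy : sing (inv y)) by (apply sing_inv; auto).
    destruct q as [|x q].
    + exfalso. simpl in E. rewrite mulr1 in E.
      apply (Hax (rev (map inv p) ++ [inv y ** c])). apply app_ne.
      apply alt_alternating. apply alt_replace_last with (inv y); auto.
      apply sing_mulCr; auto. apply sf_mulCr; auto.
      rewrite eval_app. simpl. rewrite mulr1. simpl in E. rewrite ?gmulA in *. exact E.
    + destruct Hq as [Hqf Hqc]. inversion Hqf; subst.
      assert (Hcx : alt ((c ** x) :: q)).
      { apply alt_replace_first with x. split; auto. apply sing_mulCl; auto. apply sf_mulCl; auto. }
      destruct (classic (sf y x)) as [Hyx | Hyx].
      * set (z := inv y ** (c ** x)).
        destruct (classic (C z)) as [Hz | Hz].
        -- simpl. f_equal. apply (IH q z). split; auto. eapply chain_tail; eauto.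
           split; auto. eapply chain_tail; eauto. exact Hz.
           unfold inv_word, z. simpl in E. rewrite ?gmulA in *. exact E.
        -- exfalso.
           assert (HzA : (A y /\ A x) -> A z).
           { intros [K1 K2]. destruct hAs as [_ [Hm Hi]]. unfold z. apply Hm; auto.
             apply Hm; auto. apply hC in Hc; tauto. }
           assert (HzB : (B y /\ B x) -> B z).
           { intros [K1 K2]. destruct hBs as [_ [Hm Hi]]. unfold z. apply Hm; auto.
             apply Hm; auto. apply hC in Hc; tauto. }
           assert (Hsz : sing z) by (unfold sing, sf in *; tauto).
           assert (Hsf1 : sf (inv y) z).
           { unfold sf in *. pose proof (A_inv y); pose proof (B_inv y). tauto. }
           assert (Hsf2 : sf x z) by (unfold sf in *; tauto).
           apply (Hax (rev (map inv p) ++ z :: q)).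
           { intro H. apply app_eq_nil in H. destruct H; discriminate. }
           apply alt_alternating. apply alt_join.
           apply alt_replace_last with (inv y); auto.
           apply alt_replace_first with x; auto. split; auto.
           rewrite eval_app. simpl. unfold z. simpl in E. rewrite ?gmulA in *. exact E.
      * exfalso.
        apply (Hax (rev (map inv p) ++ inv y :: (c ** x) :: q)).
        { intro H. apply app_eq_nil in H. destruct H; discriminate. }
        apply alt_alternating. apply alt_join. exact Hip.
        destruct Hcx as [Hcf Hcc]. split. constructor; auto.
        simpl. split; auto.
        unfold sf in *. pose proof (A_inv y); pose proof (B_inv y).
        pose proof (A_mulCl c x Hc); pose proof (B_mulCl c x Hc). tauto.
        rewrite eval_app. simpl. simpl in E. rewrite ?gmulA in *. exact E.
Qed.


Definition Sl (x : G) := (A x \/ B x) /\ x <> one.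
Definition nice u := Forall Sl u /\ chain u.

Lemma one_C : C one.
Proof. apply hC. split. apply hAs. apply hBs. Qed.

Lemma chain2_sing m : forall x y, Forall Sl (x :: y :: m) -> chain (x :: y :: m) ->
  Forall sing (x :: y :: m).
Proof.
  induction m as [|z m IH]; intros x y Hf Hc.
  - inversion Hf; subst. inversion H2; subst. simpl in Hc. destruct Hc as [Hn _].
    unfold Sl, sing, sf in *. pose proof (hC x); pose proof (hC y).
    constructor. tauto. constructor. tauto. constructor.
  - inversion Hf; subst. destruct Hc as [Hn Hc]. constructor.
    + inversion H2; subst. unfold Sl, sing, sf in *. pose proof (hC x); pose proof (hC y). tauto.
    + apply IH; auto.
Qed.

Lemma nice_class u : nice u -> alt u \/ exists a, u = [a] /\ C a /\ a <> one.
Proof.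
  intros [Hf Hc]. destruct u as [|x [|y m]].
  - left. split; simpl; auto.
  - inversion Hf; subst. destruct (classic (C x)).
    + right. exists x. unfold Sl in *. tauto.
    + left. split; simpl; auto. constructor; auto. unfold Sl, sing in *. tauto.
  - left. split; auto. apply chain2_sing; auto.
Qed.

Lemma alt_singC_absurd u a : alt u -> C a -> a <> one -> eval u = eval [a] -> False.
Proof.
  intros Hu Ha Hn E.
  assert (HaI : C (inv a)).
  { apply hC. apply hC in Ha. rewrite A_inv, B_inv. exact Ha. }
  assert (length (@nil G) = length u).
  { apply (Gl [] u (inv a)); auto. split; simpl; auto.
    simpl. rewrite gmul1l, E. simpl. rewrite mulr1. apply gmulVl. }
  destruct u; [|discriminate]. simpl in E. rewrite mulr1 in E. auto.
Qed.

Lemma nice_len u u' : nice u -> nice u' -> eval u = eval u' -> length u = length u'.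
Proof.
  intros Hu Hu' E.
  destruct (nice_class u Hu) as [Ha | [a [-> [Hca Hna]]]];
  destruct (nice_class u' Hu') as [Ha' | [a' [-> [Hca' Hna']]]]; auto.
  - symmetry. apply (Gl u' u one); auto. apply one_C.
    rewrite gmul1l, E. apply eval_inv_word.
  - exfalso. eapply alt_singC_absurd; eauto.
  - exfalso. eapply alt_singC_absurd; eauto.
Qed.

Section Occ.
Variable w : list G.
Hypothesis W1 : forall t a b s, w = t ++ a :: b :: s -> ~ sf a b.
Hypothesis W2 : forall t a b s, w = t ++ [a] -> w = b :: s -> ~ sf a b.
Hypothesis Wl : Forall Sl w.
Hypothesis Wne : w <> [].

Lemma occ_app k u : occ w k u -> forall q, occ w k (q ++ u).
Proof.
  induction 1; intros q. constructor.
  rewrite app_assoc. constructor. auto.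
Qed.

Lemma occ_down k v : occ w (S k) v -> occ w k v.
Proof. intro H. inversion H; subst. rewrite app_assoc. apply occ_app. auto. Qed.

Lemma occ_le d : forall j v, occ w (j + d) v -> occ w j v.
Proof.
  induction d; intros j v H. rewrite Nat.add_0_r in H. auto.
  apply IHd. apply occ_down. rewrite <- Nat.add_succ_r. auto.
Qed.

Lemma occ_le' n j v : occ w n v -> j <= n -> occ w j v.
Proof. intros H Hj. apply (occ_le (n - j)). replace (j + (n - j)) with n by lia. auto. Qed.

Lemma occ_len k v : occ w k v -> k <= length v.
Proof.
  induction 1. lia. rewrite !length_app.
  destruct w; [congruence|]. simpl. lia.
Qed.

Lemma sf_refl x : Sl x -> sf x x.
Proof. unfold Sl, sf. tauto. Qed.

Lemma occ_uncons k y m : occ w k (y :: m) -> (forall s, w <> y :: s) -> occ w k m.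
Proof.
  intros H Hn. inversion H; subst. constructor.
  destruct p as [|p1 p'].
  - simpl in H0. destruct w as [|w1 ws] eqn:Ew. congruence.
    simpl in H0. injection H0; intros; subst. exfalso. apply (Hn ws). auto.
  - simpl in H0. injection H0; intros; subst. constructor. auto.
Qed.

Lemma occ_merge k v : occ w k v -> forall l x y m z, v = l ++ x :: y :: m -> sf x y ->
  occ w (pred k) (l ++ z ++ m).
Proof.
  induction 1 as [u|k p u Hu IH]; intros l x y m z E Hs. constructor.
  simpl. apply app_eq_app in E. destruct E as [t [[Ep Et] | [El Et]]].
  - destruct t as [|x' [|y' t']]; simpl in Et.
    + exfalso. destruct w as [|w1 ws] eqn:Ew. congruence.
      simpl in Et. injection Et as E1 E2. subst w1.
      destruct ws as [|w2 ws'].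
      * apply (W2 [] x x []); auto. apply sf_refl. try rewrite Ew in Wl. inversion Wl; auto.
      * simpl in E2. injection E2 as E3 E4. subst w2. apply (W1 [] x y ws'); auto.
    + injection Et; intros Et' ->.
      assert (exists w1 ws, w = w1 :: ws) as [w1 [ws Ew]] by (destruct w; [congruence| eauto]).
      rewrite Ew in Et'. simpl in Et'. injection Et'; intros -> ->.
      rewrite !app_assoc. apply occ_app. auto.
    + injection Et; intros -> -> ->.
      apply (occ_le' (S k)).
      replace (l ++ z ++ t' ++ w ++ u) with ((l ++ z ++ t') ++ w ++ u)
        by (rewrite <- !app_assoc; reflexivity).
      constructor; auto. lia.
  - subst l. apply app_eq_app in Et. destruct Et as [t2 [[Ew Et] | [Et Eu]]].
    + destruct t2 as [|a [|b t3]]; simpl in Et.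
      * subst u. rewrite app_nil_r in Ew. subst t.
        apply (occ_le' (S (pred k))). rewrite <- app_assoc. constructor.
        apply (IH [] x y m z); auto. lia.
      * injection Et as E1 E2. subst a u.
        assert (Hm : occ w k m).
        { apply (occ_uncons k y); auto. intros s Hws. apply (W2 t x y s); auto. }
        rewrite !app_assoc. apply occ_app. auto.
      * exfalso. injection Et as E1 E2 E3. subst a b. apply (W1 t x y t3); auto.
    + subst t u. apply (occ_le' (S (pred k))).
      rewrite <- !app_assoc. constructor. apply (IH t2 x y m z); auto. lia.
Qed.


Lemma Sl_mul x y : Sl x -> Sl y -> sf x y -> x ** y <> one -> Sl (x ** y).
Proof.
  intros Hx Hy Hs Hn. split; auto. destruct hAs as [_ [HmA _]]. destruct hBs as [_ [HmB _]].
  unfold sf in Hs. destruct Hs as [[] | []]; auto.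
Qed.

Lemma reduce n : forall v, length v <= n -> Forall Sl v -> forall k, occ w k v ->
  exists u k', nice u /\ eval u = eval v /\ length u <= length v /\ occ w k' u /\
     length u + k <= length v + k'.
Proof.
  induction n as [|n IH]; intros v Hl Hf k Hk.
  - destruct v; [|simpl in Hl; lia]. exists [], k. repeat split; auto.
  - destruct (classic (exists l x y m, v = l ++ x :: y :: m /\ sf x y)) as [Hb | Hb].
    + destruct Hb as [l [x [y [m [Ev Hs]]]]].
      assert (Hfx : Forall Sl (x :: y :: m) /\ Forall Sl l).
      { subst v. apply Forall_app in Hf. tauto. }
      destruct Hfx as [Hfx Hfl]. inversion Hfx; subst. inversion H2; subst.
      assert (exists z, Forall Sl z /\ length z <= 1 /\ eval (z ++ m) = x ** (y ** eval m)) as [z [Hz1 [Hz2 Hz3]]].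
      { destruct (classic (x ** y = one)) as [He | He].
        - exists []. split; [constructor|split]. simpl; lia. simpl. now rewrite gmulA, He, gmul1l.
        - exists [x ** y]. split; [|split]. constructor; auto. apply Sl_mul; auto.
          simpl; lia. simpl. now rewrite gmulA. }
      assert (Hv' : length (l ++ z ++ m) <= n).
      { rewrite !length_app in *. simpl in Hl. lia. }
      destruct (IH (l ++ z ++ m) Hv') with (k := pred k) as [u [k' [Hu1 [Hu2 [Hu3 [Hu4 Hu5]]]]]].
      { apply Forall_app; split; auto. apply Forall_app; split; auto. }
      { apply (occ_merge k _ Hk l x y m z); auto. }
      exists u, k'. split; [exact Hu1|split;[|split;[|split;[exact Hu4|]]]].
      * rewrite Hu2, eval_app, Hz3, eval_app. reflexivity.
      * rewrite !length_app in *. simpl in *. lia.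
      * rewrite !length_app in *. simpl in *. lia.
    + exists v, k. split; [split; auto|split; [|split;[|split]]]; auto. apply chain_of_nobad.
      intros l a b m E Hs. apply Hb. eauto 6.
Qed.

Lemma min_nat (P : nat -> Prop) : forall N n, n <= N -> P n -> exists m, P m /\ forall j, P j -> m <= j.
Proof.
  induction N; intros n Hn Hp.
  - exists n. split; auto. intros. lia.
  - destruct (classic (exists j, P j /\ j < n)) as [[j [Hj1 Hj2]] | Hno].
    + apply (IHN j); auto. lia.
    + exists n. split; auto. intros j Hj. destruct (Nat.lt_ge_cases j n); auto.
      exfalso. eauto.
Qed.

Lemma max_nat (P : nat -> Prop) : forall N, P 0 -> (forall k, P k -> k <= N) ->
  exists m, P m /\ forall k, P k -> k <= m.
Proof.
  induction N; intros H0 Hb.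
  - exists 0. split; auto.
  - destruct (classic (P (S N))) as [Hs | Hs].
    + exists (S N). split; auto.
    + apply IHN; auto. intros k Hk. specialize (Hb k Hk).
      destruct (Nat.eq_dec k (S N)); subst; [contradiction|lia].
Qed.

Lemma word_exists u : Forall (fun x => A x \/ B x) u -> exists v, Forall Sl v /\ eval v = eval u.
Proof.
  induction u as [|x u IH]; intros H. exists []; auto.
  inversion H; subst. destruct (IH H3) as [v [Hv Ev]].
  destruct (classic (x = one)) as [-> | Hx].
  - exists v. split; auto. simpl. now rewrite gmul1l.
  - exists (x :: v). split. constructor; auto. split; auto. simpl. now rewrite Ev.
Qed.

Hypothesis Hgen : forall g, exists u, Forall (fun x => A x \/ B x) u /\ eval u = g.

Lemma main g : exists u : list G,
    geodesic Sl u /\ eval u = g /\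
    exists ku, occ_count w u ku /\
      forall v kv, is_word Sl v -> eval v = g -> occ_count w v kv ->
        length u - ku <= length v - kv.
Proof.
  destruct (Hgen g) as [u0 [Hu0 Eu0]]. destruct (word_exists u0 Hu0) as [v1 [Hv1 Ev1]].
  set (P := fun n => exists v k, Forall Sl v /\ eval v = g /\ occ w k v /\ n = length v - k).
  destruct (min_nat P (length v1) (length v1)) as [n0 [[v0 [k0 [Hv0 [Ev0 [Ho0 En0]]]]] Hmin]].
  { lia. }
  { exists v1, 0. repeat split; auto. congruence. constructor. lia. }
  destruct (reduce (length v0) v0 (le_n _) Hv0 k0 Ho0) as [u [k' [Hn [Eu [Hl [Hk' Hlk]]]]]].
  destruct (max_nat (fun k => occ w k u) (length u)) as [ku [Hku Hmax]].
  { constructor. }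
  { intros; apply occ_len; auto. }
  exists u. split; [|split].
  - split. destruct Hn; auto.
    intros v Hv Ev.
    destruct (reduce (length v) v (le_n _) Hv 0 (occ0 _ _)) as [u2 [k2 [Hn2 [Eu2 [Hl2 _]]]]].
    rewrite (nice_len u u2); auto. congruence.
  - congruence.
  - exists ku. split. split; auto.
    intros v kv Hv Ev [Hokv _].
    assert (n0 <= length v - kv) by (apply Hmin; exists v, kv; repeat split; auto).
    pose proof (occ_len _ _ Hk'). pose proof (occ_len _ _ Ho0). pose proof (Hmax _ Hk').
    lia.
Qed.

End Occ.

End Main.

Theorem lemma3p2 (G : Group) (A B C : G -> Prop)
  (hamalg : is_amalgam A B C)
  (hA : exists a, A a /\ ~ C a)   (* |A/C| >= 2 *)
  (hB : exists b, B b /\ ~ C b)   (* |B/C| >= 2 *)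
  (w : list G)
  (hw_word : is_word (fun x => (A x \/ B x) /\ x <> @gone G) w)
  (hw_ne : w <> [])
  (hw2 : reduced A B C (w ++ w)) :
  let S := fun x : G => (A x \/ B x) /\ x <> @gone G in
  forall g : G, exists u : list G,
    geodesic S u /\ eval u = g /\
    exists ku, occ_count w u ku /\
      forall v kv, is_word S v -> eval v = g -> occ_count w v kv ->
        length u - ku <= length v - kv.
Proof.
  intros S g.
  destruct hamalg as [hAs [hBs [hC [Hgen Hax]]]].
  assert (Hch : chain G A B (w ++ w)).
  { apply (alternating_chain G A B C hC). destruct hw2 as [Hl | Ha]; auto.
    exfalso. rewrite length_app in Hl. destruct w; [congruence|]. simpl in Hl. lia. }
  exact (main G A B C hC hAs hBs Hax w
    (fun t a b s E => chain_inv G A B _ Hch t a b (s ++ w)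
        (eq_trans (f_equal (fun l => l ++ w) E) (eq_sym (app_assoc t (a :: b :: s) w))))
    (fun t a b s E1 E2 => chain_inv G A B _ Hch t a b s
        (eq_trans (f_equal2 (@app G) E1 E2) (eq_sym (app_assoc t [a] (b :: s)))))
    hw_word hw_ne Hgen g).
Qed.
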